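(* Let $\Theta$ be an overconvergent Dwork operator on $A_0$. Choose rational numbers $b,c_1$ with $0<b\le b_\sigma$ such that $\Theta(X^u)\in L(qb,c_1)$ for all $u$ with $0\le u_i<q$. Then for every real number $c$, $\Theta(L(b,c))\subset L(qb,c+c_1)$.
   Context: $R$ is a complete discrete valuation ring of characteristic $0$ with uniformizer $\pi$, residue field $\mathbf{F}_q$, valuation $\mathrm{ord}_\pi$. Fix $n\ge1$; for $u\in\mathbf{Z}^n_{\ge0}$, $X^u=\prod X_i^{u_i}$, $|u|=\sum u_i$. $A_0=\{\sum a_uX^u:a_u\in R,\ \mathrm{ord}_\pi a_u\to\infty\}$, $A=\{\sum a_uX^u\in A_0:\liminf_{|u|\to\infty}\mathrm{ord}_\pi a_u/|u|>0\}$. $\sigma$ is an $R$-algebra endomorphism of $A_0$ with $\sigma(X_i)=X_i^q+\pi f_i$, $f_i\in A$. For $b>0$ and $c$, $L(b,c)=\{\sum_va_vX^v:a_v\in R,\ \mathrm{ord}_\pi a_v\ge b|v|+c\}$; $b_\sigma>0$ is a fixed rational with $\pi f_i\in L(b_\sigma,0)$ for all $i$. A Dwork operator on $A_0$ is an $R$-linear endomorphism $\Theta$ of $A_0$ with $\Theta(\sigma(a_1)a_2)=a_1\Theta(a_2)$ for $a_1,a_2\in A_0$; it is overconvergent if $\Theta(A)\subset A$. *)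

(* Defs.v *)
From HB Require Import structures.
From mathcomp Require Import all_boot all_order all_algebra.
From mathcomp Require Import reals.
Set Implicit Arguments. Unset Strict Implicit. Unset Printing Implicit Defensive.
Import Order.TTheory GRing.Theory Num.Theory.
Local Open Scope ring_scope.

Section Dwork.
Variable R : idomainType.
Variable n : nat.

Definition expo := n.-tuple nat.
Definition deg (u : expo) : nat := \sum_(i < n) tnth u i.

Definition ps := expo -> R.

Definition pi_dvd (pi : R) (m : nat) (a : R) : Prop := exists r, a = pi ^+ m * r.

(* ord_pi(a) >= x for a real number x: since ord_pi(a) is in N u {oo},
   this means pi^m | a for every natural m <= ceil(x), i.e. for every
   natural m with m < x + 1. *)
Definition ord_ge (RR : realType) (pi : R) (a : R) (x : RR) : Prop :=
  forall m : nat, (m%:R < x + 1) -> pi_dvd pi m a.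

(* R is a complete discrete valuation ring of characteristic 0 with
   uniformizer pi and residue field with q elements. *)
Definition is_complete_dvr (pi : R) (q : nat) : Prop :=
  [pchar R] =i pred0 /\
  pi != 0 /\ pi \notin GRing.unit /\
  (forall a : R, a != 0 -> exists m : nat, exists u : R,
       u \is a GRing.unit /\ a = pi ^+ m * u) /\
  (forall s : nat -> R, (forall k, pi_dvd pi k (s k.+1 - s k)) ->
       exists l : R, forall k, pi_dvd pi k (l - s k)) /\
  (exists reps : seq R,
       size reps = q /\
       (forall a : R, exists2 r, r \in reps & pi_dvd pi 1 (a - r)) /\
       (forall r1 r2, r1 \in reps -> r2 \in reps -> pi_dvd pi 1 (r1 - r2) -> r1 = r2)).

Definition inA0 (pi : R) (f : ps) : Prop :=
  forall k : nat, exists N : nat, forall u : expo, (N <= deg u)%N -> pi_dvd pi k (f u).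

Definition inL (RR : realType) (pi : R) (b c : RR) (f : ps) : Prop :=
  forall v : expo, ord_ge pi (f v) (b * (deg v)%:R + c).

Definition inA (RR : realType) (pi : R) (f : ps) : Prop :=
  inA0 pi f /\
  exists eps : RR, 0 < eps /\
    exists N : nat, forall u : expo, (N <= deg u)%N -> ord_ge pi (f u) (eps * (deg u)%:R).

Definition psadd (f g : ps) : ps := fun w => f w + g w.
Definition psscale (r : R) (f : ps) : ps := fun w => r * f w.
Definition psmul (f g : ps) : ps := fun w =>
  \sum_(t : n.-tuple 'I_(deg w).+1 | [forall i, (tnth t i <= tnth w i)%N])
     f (map_tuple (@nat_of_ord _) t) * g [tuple (tnth w i - tnth t i)%N | i < n].
Definition psmono (u : expo) : ps := fun v => if v == u then 1 else 0.
Definition psone : ps := psmono [tuple 0%N | _ < n].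
Definition psX (i : 'I_n) : ps := psmono [tuple (i == j : nat) | j < n].
Definition pspow (f : ps) (k : nat) : ps := iter k (psmul f) psone.

Definition is_ralg_endo (pi : R) (s : ps -> ps) : Prop :=
  (forall f, inA0 pi f -> inA0 pi (s f)) /\
  (forall f g, inA0 pi f -> inA0 pi g -> s (psadd f g) = psadd (s f) (s g)) /\
  (forall r f, inA0 pi f -> s (psscale r f) = psscale r (s f)) /\
  (forall f g, inA0 pi f -> inA0 pi g -> s (psmul f g) = psmul (s f) (s g)) /\
  s psone = psone.

Definition is_dwork_op (pi : R) (s Theta : ps -> ps) : Prop :=
  (forall f, inA0 pi f -> inA0 pi (Theta f)) /\
  (forall f g, inA0 pi f -> inA0 pi g -> Theta (psadd f g) = psadd (Theta f) (Theta g)) /\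
  (forall r f, inA0 pi f -> Theta (psscale r f) = psscale r (Theta f)) /\
  (forall a1 a2, inA0 pi a1 -> inA0 pi a2 -> Theta (psmul (s a1) a2) = psmul a1 (Theta a2)).

Definition overconvergent (RR : realType) (pi : R) (Theta : ps -> ps) : Prop :=
  forall f, inA RR pi f -> inA RR pi (Theta f).

End Dwork.

(* Main.v *)
Require Import Defs.
From HB Require Import structures.
From mathcomp Require Import all_boot all_order all_algebra.
From mathcomp Require Import reals.
From Stdlib Require Import FunctionalExtensionality ClassicalEpsilon.
From mathcomp Require Import lra.
Import Order.TTheory GRing.Theory Num.Theory.
Local Open Scope ring_scope.
Set Implicit Arguments. Unset Strict Implicit. Unset Printing Implicit Defensive.


Section Aux.
Variable R : idomainType.
Variable pi : R.

Lemma pd0 m : pi_dvd pi m 0.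
Proof. by exists 0; rewrite mulr0. Qed.
Lemma pdD m a b : pi_dvd pi m a -> pi_dvd pi m b -> pi_dvd pi m (a + b).
Proof. by move=> [r ->] [s ->]; exists (r + s); rewrite mulrDr. Qed.
Lemma pdB m a b : pi_dvd pi m a -> pi_dvd pi m b -> pi_dvd pi m (a - b).
Proof. by move=> [r ->] [s ->]; exists (r - s); rewrite mulrBr. Qed.
Lemma pdMr m a b : pi_dvd pi m a -> pi_dvd pi m (a * b).
Proof. by move=> [r ->]; exists (r * b); rewrite mulrA. Qed.
Lemma pdMl m a b : pi_dvd pi m b -> pi_dvd pi m (a * b).
Proof. by rewrite mulrC; apply: pdMr. Qed.
Lemma pdM m1 m2 a b : pi_dvd pi m1 a -> pi_dvd pi m2 b -> pi_dvd pi (m1 + m2) (a * b).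
Proof. by move=> [r ->] [s ->]; exists (r * s); rewrite exprD mulrACA. Qed.
Lemma pd_le m k a : (k <= m)%N -> pi_dvd pi m a -> pi_dvd pi k a.
Proof.
move=> km [r ->]; exists (pi ^+ (m - k) * r).
by rewrite mulrA -exprD subnKC.
Qed.
Lemma pd_0 a : pi_dvd pi 0 a.
Proof. by exists a; rewrite expr0 mul1r. Qed.
Lemma pd_cancel m k t : pi != 0 -> pi_dvd pi (m + k) (pi ^+ m * t) -> pi_dvd pi k t.
Proof.
move=> pi0 [r]; rewrite exprD -mulrA => /mulfI; rewrite expf_neq0 // => H.
by exists r; apply: H.
Qed.
Lemma pd_mono m : pi_dvd pi m (pi ^+ m).
Proof. by exists 1; rewrite mulr1. Qed.

Variable RR : realType.

Lemma og_le (a : R) (x y : RR) : x <= y -> ord_ge pi a y -> ord_ge pi a x.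
Proof. move=> xy H m mx; apply: H; apply: (lt_le_trans mx); by rewrite lerD2r. Qed.
Lemma og0 (x : RR) : ord_ge pi 0 x.
Proof. by move=> m _; apply: pd0. Qed.
Lemma ogD (a b : R) (x : RR) : ord_ge pi a x -> ord_ge pi b x -> ord_ge pi (a + b) x.
Proof. by move=> Ha Hb m mx; apply: pdD; [apply: Ha|apply: Hb]. Qed.

Lemma og_sum (I : Type) (r : seq I) (P : pred I) (F : I -> R) (x : RR) :
  (forall i, P i -> ord_ge pi (F i) x) -> ord_ge pi (\sum_(i <- r | P i) F i) x.
Proof.
move=> H; apply: (big_ind (fun v => ord_ge pi v x)); [exact: og0 | move=> ? ?; exact: ogD | exact: H].
Qed.

Lemma ogM_le (a b : R) (x y : RR) m :
  (forall k, (k <= m)%N -> k%:R < x + 1 -> pi_dvd pi k a) ->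
  (forall k, (k <= m)%N -> k%:R < y + 1 -> pi_dvd pi k b) ->
  m%:R < x + y + 1 -> pi_dvd pi m (a * b).
Proof.
move=> Ha Hb mxy.
have [y0|y0] := leP (y + 1) 0.
  rewrite -[m]addn0; apply: pdM; last by apply: pd_0.
  apply: Ha => //; move: mxy y0; clear; move=> mxy y0; lra.
have ex : exists k, (k <= m)%N && (k%:R < y + 1) by exists 0%N; rewrite leq0n.
have bd : forall k, (k <= m)%N && (k%:R < y + 1) -> (k <= m)%N by move=> k /andP[].
case: (ex_maxnP ex bd) => k /andP[km ky] kmax.
rewrite -(subnK km); apply: pdM; last by apply: Hb.
have [kem|] := eqVneq k m; first by rewrite kem subnn; apply: pd_0.
move=> kne; have km1 : (k.+1 <= m)%N by rewrite ltn_neqAle kne km.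
have : ~~ ((k.+1 <= m)%N && ((k.+1)%:R < y + 1)).
  by apply/negP => /kmax; rewrite ltnn.
rewrite km1 /= -leNgt => yk.
apply: Ha; first by rewrite leq_subr.
rewrite natrB // -natr1 in yk *.
move: mxy yk; clear; move=> mxy yk. lra.
Qed.

Lemma ogM (a b : R) (x y : RR) : ord_ge pi a x -> ord_ge pi b y -> ord_ge pi (a * b) (x + y).
Proof.
move=> Ha Hb m mxy; apply: (ogM_le (x := x) (y := y)) => // k _; [exact: Ha | exact: Hb].
Qed.
End Aux.

Section Tup.
Variable R : idomainType.
Variable n : nat.
Implicit Types a u v w : expo n.

Definition tle a w := [forall j, (tnth a j <= tnth w j)%N].
Definition tadd a u : expo n := [tuple (tnth a j + tnth u j)%N | j < n].
Definition tsub w a : expo n := [tuple (tnth w j - tnth a j)%N | j < n].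
Definition ke (i : 'I_n) (k : nat) : expo n := [tuple ((i == j) * k)%N | j < n].

Lemma deg_tadd a u : deg (tadd a u) = (deg a + deg u)%N.
Proof.
rewrite /deg -big_split /=; apply: eq_bigr => j _; by rewrite tnth_mktuple.
Qed.

Lemma tadd_sub a w : tle a w -> tadd a (tsub w a) = w.
Proof.
move/forallP=> H; apply: eq_from_tnth => j; rewrite !tnth_mktuple subnKC //.
Qed.

Lemma deg_ke i k : deg (ke i k) = k.
Proof.
rewrite /deg (bigD1 i) //= tnth_mktuple eqxx mul1n big1 ?addn0 //.
by move=> j ji; rewrite tnth_mktuple eq_sym (negPf ji).
Qed.

Lemma tnth_le_deg w j : (tnth w j <= deg w)%N.
Proof. by rewrite /deg (bigD1 j) //= leq_addr. Qed.

Lemma deg_le a w : tle a w -> deg w = (deg a + deg (tsub w a))%N.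
Proof. by move=> H; rewrite -deg_tadd tadd_sub. Qed.

Lemma psmul_mono_l a (h : ps R n) w :
  psmul (psmono R a) h w = if tle a w then h (tsub w a) else 0.
Proof.
rewrite /psmul /psmono.
case: ifP => aw.
  have aw' := aw; move/forallP: aw' => aw'.
  pose t0 : n.-tuple 'I_(deg w).+1 :=
    [tuple inord (tnth a j) | j < n].
  have t0a : map_tuple (@nat_of_ord _) t0 = a.
    apply: eq_from_tnth => j; rewrite tnth_map tnth_mktuple inordK //.
    by rewrite ltnS (leq_trans (aw' j)) // tnth_le_deg.
  have t0j : forall j, (tnth t0 j : nat) = tnth a j.
    by move=> j; rewrite -t0a [RHS]tnth_map.
  have t0w : [forall i, (tnth t0 i <= tnth w i)%N].
    by apply/forallP => j; rewrite t0j aw'.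
  rewrite (bigD1 t0) //= t0a eqxx mul1r big1 ?addr0.
    congr h; apply: eq_from_tnth => j.
    by rewrite !tnth_mktuple inordK // ltnS (leq_trans (aw' j)) // tnth_le_deg.
  move=> t /andP[_ tt0]; case: eqP; last by rewrite mul0r.
  move=> ta; case/negP: tt0; apply/eqP; apply: eq_from_tnth => j.
  apply: val_inj => /=.
  by rewrite t0j -ta [RHS]tnth_map.
rewrite big1 // => t tw; case: eqP; last by rewrite mul0r.
move=> ta; move: aw; rewrite /tle -ta; move/negP; case.
apply/forallP => j; rewrite tnth_map; by move/forallP: tw.
Qed.

Lemma psmono_mul a u : psmul (psmono R a) (psmono R u) = psmono R (tadd a u).
Proof.
apply: functional_extensionality => w; rewrite psmul_mono_l /psmono.
case: ifP => aw.
  congr (if _ then _ else _); apply/eqP/eqP => [<-|->]; first by rewrite tadd_sub.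
  by apply: eq_from_tnth => j; rewrite !tnth_mktuple addKn.
case: eqP => // wu; move: aw; rewrite wu; move/negP; case.
by apply/forallP => j; rewrite tnth_mktuple leq_addr.
Qed.

Lemma pspow_X i k : pspow (psX R i) k = psmono R (ke i k).
Proof.
elim: k => [|k IH].
  rewrite /pspow /= /psone; congr psmono; apply: eq_from_tnth => j.
  by rewrite !tnth_mktuple muln0.
rewrite /pspow iterS -/(pspow _ _) IH /psX psmono_mul; congr psmono.
apply: eq_from_tnth => j; rewrite !tnth_mktuple.
by case: (i == j); rewrite ?mul1n ?mul0n.
Qed.

Lemma psmul_addl (F G H : ps R n) : psmul (psadd F G) H = psadd (psmul F H) (psmul G H).
Proof.
apply: functional_extensionality => w; rewrite /psmul /psadd -big_split /=.
by apply: eq_bigr => t _; rewrite mulrDl.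
Qed.

Lemma psmul_scalel r (F H : ps R n) : psmul (psscale r F) H = psscale r (psmul F H).
Proof.
apply: functional_extensionality => w; rewrite /psmul /psscale mulr_sumr.
by apply: eq_bigr => t _; rewrite mulrA.
Qed.
End Tup.


Section LL.
Variable R : idomainType.
Variable n : nat.
Variable RR : realType.
Variable pi : R.
Implicit Types (b c : RR) (F G : ps R n).

Lemma L_A0 b c F : 0 < b -> inL pi b c F -> inA0 pi F.
Proof.
move=> b0 FL k.
set N := Num.Def.archi_bound `|(k%:R - c) / b|.
exists N => u Nu; apply: FL.
have h1 : (k%:R - c) / b < N%:R.
  apply: le_lt_trans (ler_norm _) _; apply: archi_boundP; exact: normr_ge0.
have h2 : (N%:R : RR) <= (deg u)%:R by rewrite ler_nat.
have h3 : (k%:R - c) / b < (deg u)%:R by apply: lt_le_trans h1 h2.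
rewrite ltr_pdivrMr // in h3.
move: h3 b0; clear; move=> h3 b0; lra.
Qed.

Lemma A0_add F G : inA0 pi F -> inA0 pi G -> inA0 pi (psadd F G).
Proof.
move=> HF HG k; case: (HF k) => N1 H1; case: (HG k) => N2 H2.
exists (maxn N1 N2) => u; rewrite geq_max => /andP[u1 u2].
by apply: pdD; [apply: H1|apply: H2].
Qed.

Lemma A0_scale r F : inA0 pi F -> inA0 pi (psscale r F).
Proof.
move=> HF k; case: (HF k) => N1 H1; exists N1 => u u1; apply: pdMl; exact: H1.
Qed.

Lemma L_le b b' c c' F : 0 <= b -> b <= b' -> c' <= c -> inL pi b' c F -> inL pi b c' F.
Proof.
move=> b0 bb cc H v; apply: og_le (H v).
have : 0 <= ((deg v)%:R : RR) by [].
move: bb cc; clear; move=> bb cc dv; nra.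
Qed.

Lemma L_add b c F G : inL pi b c F -> inL pi b c G -> inL pi b c (psadd F G).
Proof. by move=> HF HG v; apply: ogD. Qed.

Lemma L_mono b (v : expo n) : inL pi b (- b * (deg v)%:R) (psmono R v).
Proof.
move=> w m; rewrite /psmono; case: eqP => [->|_]; last by move=> _; apply: pd0.
rewrite mulNr addrN add0r => H.
have : (m < 1)%N by rewrite -(ltr_nat RR).
by rewrite ltnS leqn0 => /eqP ->; exact: pd_0.
Qed.

Lemma L_mul b c c' F G : inL pi b c F -> inL pi b c' G -> inL pi b (c + c') (psmul F G).
Proof.
move=> HF HG w; rewrite /psmul; apply: og_sum => t tw.
set a := map_tuple (@nat_of_ord _) t.
have aw : tle a w by apply/forallP => j; rewrite tnth_map; move/forallP: tw.
have ts : [tuple (tnth w i - tnth t i)%N | i < n] = tsub w a.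
  by apply: eq_from_tnth => j; rewrite !tnth_mktuple tnth_map.
rewrite ts; have := ogM (HF a) (HG (tsub w a)).
by rewrite (deg_le aw) natrD mulrDr addrACA addrA.
Qed.

Lemma L_div b bs F : pi != 0 -> 0 <= b -> b <= bs -> inL pi bs 0 (psscale pi F) -> inL pi b (-1) F.
Proof.
move=> pi0 b0 bb H v m mb.
apply: (@pd_cancel _ pi 1%N m) => //; rewrite expr1 add1n; apply: H.
have : 0 <= ((deg v)%:R : RR) by [].
rewrite -natr1; move: mb bb b0; clear; move=> mb bb b0 dv; nra.
Qed.

End LL.
Arguments L_mul [R n RR pi b c c' F G] _ _.
Arguments L_div [R n RR pi b bs F] _ _ _ _.
Arguments L_mono [R n RR] pi b v.
Arguments L_add [R n RR pi b c F G] _ _.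
Arguments L_le [R n RR pi b b' c c' F] _ _ _ _.


Section Main.
Variables (RR : realType) (R : idomainType) (n : nat) (pi : R) (q : nat).
Variables (sigma Theta : ps R n -> ps R n) (f : 'I_n -> ps R n) (B Bs C1 : RR).
Hypotheses (pi0 : pi != 0) (q0 : (0 < q)%N) (B0 : 0 < B) (BBs : B <= Bs).
Hypothesis fL : forall i, inL pi Bs 0 (psscale pi (f i)).
Hypothesis sigX : forall i, sigma (psX R i) = psadd (pspow (psX R i) q) (psscale pi (f i)).
Hypothesis dw : is_dwork_op pi sigma Theta.
Hypothesis base : forall u : expo n, (forall i, tnth u i < q)%N ->
  inL pi (q%:R * B) C1 (Theta (psmono R u)).

Definition Gp m := forall (c : RR) (g : ps R n) (w : expo n), inL pi B c g ->
  m%:R < q%:R * B * (deg w)%:R + c + C1 + 1 -> pi_dvd pi m (Theta g w).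
Definition Pp m := forall (v w : expo n),
  m%:R < q%:R * B * (deg w)%:R + C1 - B * (deg v)%:R + 1 ->
  pi_dvd pi m (Theta (psmono R v) w).

Lemma A0_mono (v : expo n) : inA0 pi (psmono R v).
Proof. apply: (L_A0 (c := - B * (deg v)%:R) B0); exact: L_mono. Qed.

Lemma psX_ke (i : 'I_n) : psX R i = psmono R (ke i 1).
Proof. by congr psmono; apply: eq_from_tnth => j; rewrite !tnth_mktuple muln1. Qed.

Lemma P_step m : (forall m', (m' < m)%N -> Gp m') -> Pp m.
Proof.
move=> IHG.
suff key : forall d (v : expo n), deg v = d -> forall w,
  m%:R < q%:R * B * (deg w)%:R + C1 - B * (deg v)%:R + 1 ->
  pi_dvd pi m (Theta (psmono R v) w).
  by move=> v w; apply: key.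
elim/ltn_ind => d IH v dv w H.
case: (boolP [forall i, tnth v i < q]%N) => [/forallP vq | ].
  apply: (@base v vq w m).
  have : 0 <= B * (deg v)%:R by rewrite mulr_ge0 // ltW.
  lra.
rewrite negb_forall => /existsP [i]; rewrite -leqNgt => qv.
set v' := tsub v (ke i q).
have kv : tle (ke i q) v.
  apply/forallP => j; rewrite tnth_mktuple.
  by case: eqP => [<-|_]; rewrite ?mul1n ?mul0n.
have vv : tadd (ke i q) v' = v := tadd_sub kv.
have dv' : deg v = (q + deg v')%N by rewrite (deg_le kv) deg_ke.
have FL : inL pi B (-1 + - B * (deg v')%:R) (psmul (f i) (psmono R v')).
  exact: L_mul (L_div pi0 (ltW B0) BBs (fL i)) (L_mono pi B v').
have FA := L_A0 B0 FL.
have id1 : psmul (sigma (psX R i)) (psmono R v') =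
    psadd (psmono R v) (psscale pi (psmul (f i) (psmono R v'))).
  by rewrite sigX psmul_addl pspow_X psmono_mul vv psmul_scalel.
case: dw => _ [dadd [dscale dmul]].
have XA : inA0 pi (psX R i) by rewrite psX_ke; apply: A0_mono.
have e1 := dmul (psX R i) (psmono R v') XA (A0_mono v').
rewrite id1 (dadd _ _ (A0_mono v) (A0_scale pi FA)) (dscale _ _ FA) in e1.
have e2 := congr1 (fun h => h w) e1; rewrite /psadd /psscale /= in e2.
have -> : Theta (psmono R v) w =
   psmul (psX R i) (Theta (psmono R v')) w - pi * Theta (psmul (f i) (psmono R v')) w.
  by rewrite -e2 addrK.
apply: pdB.
  rewrite psX_ke psmul_mono_l; case: ifP => [kw|_]; last exact: pd0.
  apply: (IH (deg v')) => //.
    by rewrite -dv dv' -{1}[deg v']add0n ltn_add2r.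
  have dw' := deg_le kw; rewrite deg_ke in dw'.
  rewrite dw' dv' !natrD in H.
  lra.
destruct m as [|m]; first exact: pd_0.
rewrite -add1n; apply: pdM; first by exists 1; rewrite expr1 mulr1.
apply: (IHG m (ltnSn m) _ _ w FL).
have : 0 <= B * q%:R by rewrite mulr_ge0 // ltW.
rewrite dv' natrD -natr1 in H.
lra.
Qed.

Lemma Fin m : (forall m', (m' <= m)%N -> Pp m') ->
  forall (s : seq (expo n)) (c : RR) (g : ps R n) (w : expo n),
  (forall v, v \notin s -> g v = 0) -> inL pi B c g ->
  m%:R < q%:R * B * (deg w)%:R + c + C1 + 1 -> pi_dvd pi m (Theta g w).
Proof.
move=> HP; case: dw => _ [dadd [dscale _]].
elim=> [|v0 s IH] c g w gs gL H.
  have -> : g = psscale 0 g.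
    by apply: functional_extensionality => v; rewrite /psscale mul0r; apply: gs.
  rewrite dscale; last exact: L_A0 B0 gL.
  rewrite /psscale mul0r; exact: pd0.
pose g' := fun v => if v == v0 then 0 else g v.
pose g1 := psscale (g v0) (psmono R v0).
have gg : g = psadd g1 g'.
  apply: functional_extensionality => v.
  rewrite /g' /g1 /psadd /psscale /psmono.
  by case: (v == v0) / eqP => [->|_]; rewrite ?mulr1 ?addr0 ?mulr0 ?add0r.
have g'L : inL pi B c g'.
  by move=> v; rewrite /g'; case: ifP => _; [exact: og0 | exact: gL].
have g's : forall v, v \notin s -> g' v = 0.
  move=> v vs; rewrite /g'; case: eqP => // ne; apply: gs.
  by rewrite in_cons negb_or vs andbT; apply/eqP.
rewrite gg (dadd _ _ (A0_scale _ (A0_mono v0)) (L_A0 B0 g'L)).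
rewrite /psadd /g1 (dscale _ _ (A0_mono v0)) /psscale.
apply: pdD; last exact: IH g's g'L H.
apply: (ogM_le (x := B * (deg v0)%:R + c) (y := q%:R * B * (deg w)%:R + C1 - B * (deg v0)%:R)).
- by move=> k _ k1; apply: gL.
- move=> k km k1; apply: (HP k km v0 w); lra.
- lra.
Qed.

Lemma G_step m : (forall m', (m' <= m)%N -> Pp m') -> Gp m.
Proof.
move=> HP c g w gL H.
have gA := L_A0 B0 gL.
case: (gA m) => N HN.
pose t v := if (deg v < N)%N then 0
            else epsilon (inhabits 0) (fun r => g v = pi ^+ m * r).
pose gp v := if (deg v < N)%N then g v else 0.
have tspec : forall v, ~~ (deg v < N)%N -> g v = pi ^+ m * t v.
  move=> v nv; rewrite /t (negbTE nv); move: nv; rewrite -leqNgt => Nv.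
  apply: (epsilon_spec (inhabits 0) (fun r => g v = pi ^+ m * r)).
  exact: HN v Nv.
have gg : g = psadd gp (psscale (pi ^+ m) t).
  apply: functional_extensionality => v; rewrite /psadd /psscale /gp.
  case: ifP => h; first by rewrite /t h mulr0 addr0.
  by rewrite add0r; apply: tspec; rewrite h.
have tA : inA0 pi t.
  move=> k; case: (gA (m + k)%N) => N2 H2; exists (maxn N N2) => u.
  rewrite geq_max => /andP[u1 u2].
  apply: (pd_cancel (m := m)) pi0 _.
  rewrite -tspec; first exact: H2.
  by rewrite -leqNgt.
have gpL : inL pi B c gp.
  by move=> v; rewrite /gp; case: ifP => _; [exact: gL | exact: og0].
have gpA := L_A0 B0 gpL.
case: dw => _ [dadd [dscale _]].
rewrite gg (dadd _ _ gpA (A0_scale _ tA)) (dscale _ _ tA) /psadd /psscale.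
apply: pdD; last exact: pdMr (pd_mono _ _).
pose s := map (fun t : n.-tuple 'I_N => map_tuple (@nat_of_ord N) t)
              (index_enum (n.-tuple 'I_N)).
apply: (Fin HP (s := s) _ gpL H) => v vs; rewrite /gp; case: ifP => // dvN.
move/negP: vs; case; apply/mapP.
exists [tuple (Ordinal (leq_ltn_trans (tnth_le_deg v j) dvN)) | j < n].
  by rewrite mem_index_enum.
by apply: eq_from_tnth => j; rewrite tnth_map tnth_mktuple.
Qed.

Lemma mainG m : Gp m.
Proof.
elim/ltn_ind: m => m IH; apply: G_step => m' m'm; apply: P_step => m'' lt.
by apply: IH; apply: leq_trans lt m'm.
Qed.

End Main.

Unset Implicit Arguments. Set Strict Implicit. Set Printing Implicit Defensive.

Theorem theorem4p6 (RR : realType) (R : idomainType) (n : nat) (pi : R) (q : nat)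
  (sigma : ps R n -> ps R n) (f : 'I_n -> ps R n) (b_sigma : rat)
  (Theta : ps R n -> ps R n) (b c1 : rat) :
  (0 < n)%N ->
  is_complete_dvr pi q ->
  (forall i, inA RR pi (f i)) ->
  is_ralg_endo pi sigma ->
  (forall i, sigma (psX R i) = psadd (pspow (psX R i) q) (psscale pi (f i))) ->
  0 < b_sigma ->
  (forall i, inL pi (ratr b_sigma : RR) 0 (psscale pi (f i))) ->
  is_dwork_op pi sigma Theta ->
  overconvergent RR pi Theta ->
  0 < b -> b <= b_sigma ->
  (forall u : expo n, (forall i, tnth u i < q)%N ->
     inL pi (q%:R * ratr b : RR) (ratr c1) (Theta (psmono R u))) ->
  forall (c : RR) (g : ps R n),
    inL pi (ratr b) c g -> inL pi (q%:R * ratr b) (c + ratr c1) (Theta g).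
Proof.
move=> n0 Hdvr fA sendo sigX bs0 fL dwo ovc b0 bbs base c g gL.
case: Hdvr => _ [pi0 [_ [_ [_ [rs [sz [cov _]]]]]]].
have q0 : (0 < q)%N.
  case: (cov 0) => r rin _; rewrite -sz.
  by case: rs rin {sz cov}.
have B0 : 0 < (ratr b : RR) by rewrite ltr0q.
have BBs : (ratr b : RR) <= ratr b_sigma by rewrite ler_rat.
move=> w m H.
apply: (mainG pi0 q0 B0 BBs fL sigX dwo base gL).
by rewrite addrA in H.
Qed.
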